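(* Let $P$ be a linear process, $a$ a name, and suppose $\mathrm{cin}(a,P)$ (respectively $\mathrm{cout}(a,P)$) and $P\to^* Q$. Then exactly one of the following holds: (1) $\mathrm{cin}(a,Q)$ (respectively $\mathrm{cout}(a,Q)$); (2) $a\notin\mathcal{N}(Q)$ and there exist processes $R_a, R'_a$ with $P\to^* R_a\to R'_a\to^* Q$, $a\notin\mathcal{N}(R'_a)$, $\mathcal{N}(R'_a)\cup\{a\}=\mathcal{N}(R_a)$, and $\mathrm{sync}(a,R_a)$.
   Context: Processes: $P ::= \mathbf{0} \mid \alpha.P \mid P\,|\,Q$ where $\alpha$ is a name $a$ or a co-name $\bar a$ (with $\bar{\bar a}=a$). Structural congruence $\equiv$ is the smallest congruence with $P|\mathbf{0}\equiv P$, $P|Q\equiv Q|P$, $P|(Q|R)\equiv(P|Q)|R$. Reduction $\to$ is the smallest relation with $a.P\,|\,\bar a.Q\to P\,|\,Q$, closed under parallel contexts and under $\equiv$; $\to^*$ is its reflexive–transitive closure. A process is linear if each name occurs at most once as an input $a$ and at most once as an output $\bar a$. $\mathcal{N}(P)$ is the set of names occurring in $P$ (as $a$ or $\bar a$). Process contexts: $C ::= [-] \mid P\,|\,C \mid C\,|\,P \mid \alpha.C$, with $C[Q]$ the result of filling the hole with $Q$. $\mathrm{in}(a,Q)$ iff $\exists Q',Q''.\ Q\equiv Q'\,|\,a.Q''$; $\mathrm{out}(a,Q)$ iff $\exists Q',Q''.\ Q\equiv Q'\,|\,\bar a.Q''$; $\mathrm{sync}(a,Q)$ iff both hold. $\mathrm{cin}(a,P)$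 iff there exist a process context $C$ and $Q$ with $P\equiv C[Q]$ and $\mathrm{in}(a,Q)$; $\mathrm{cout}(a,P)$ likewise with $\mathrm{out}(a,Q)$. *)

(* Defs.v *)
(* a finite CCS-like process calculus (no restriction). *)
From Stdlib Require Import Arith Relations.

(* Names are natural numbers. A prefix is a name a (input) or a co-name
   \bar a (output); the involution \bar{\bar a} = a is implicit in this
   representation. *)
Definition name := nat.

Inductive act : Type :=
| In : name -> act
| Out : name -> act.

Inductive proc : Type :=
| Nil : proc
| Pre : act -> proc -> proc
| Par : proc -> proc -> proc.

Inductive scong : proc -> proc -> Prop :=
| sc_refl : forall P, scong P P
| sc_sym : forall P Q, scong P Q -> scong Q P
| sc_trans : forall P Q R, scong P Q -> scong Q R -> scong P R
| sc_par_nil : forall P, scong (Par P Nil) P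
| sc_par_comm : forall P Q, scong (Par P Q) (Par Q P)
| sc_par_assoc : forall P Q R, scong (Par P (Par Q R)) (Par (Par P Q) R)
| sc_cong_pre : forall α P Q, scong P Q -> scong (Pre α P) (Pre α Q)
| sc_cong_par : forall P P' Q Q', scong P P' -> scong Q Q' ->
    scong (Par P Q) (Par P' Q').

Inductive red : proc -> proc -> Prop :=
| red_comm : forall a P Q, red (Par (Pre (In a) P) (Pre (Out a) Q)) (Par P Q)
| red_par_l : forall P P' Q, red P P' -> red (Par P Q) (Par P' Q)
| red_par_r : forall P Q Q', red Q Q' -> red (Par P Q) (Par P Q')
| red_struct : forall P P1 Q1 Q, scong P P1 -> red P1 Q1 -> scong Q1 Q -> red P Q.

Definition reds : proc -> proc -> Prop := clos_refl_trans proc red.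

Fixpoint count_in (a : name) (P : proc) : nat :=
  match P with
  | Nil => 0
  | Pre (In b) P' => (if Nat.eqb a b then 1 else 0) + count_in a P'
  | Pre (Out _) P' => count_in a P'
  | Par P1 P2 => count_in a P1 + count_in a P2
  end.

Fixpoint count_out (a : name) (P : proc) : nat :=
  match P with
  | Nil => 0
  | Pre (Out b) P' => (if Nat.eqb a b then 1 else 0) + count_out a P'
  | Pre (In _) P' => count_out a P'
  | Par P1 P2 => count_out a P1 + count_out a P2
  end.

Definition linear (P : proc) : Prop :=
  forall a, count_in a P <= 1 /\ count_out a P <= 1.

Definition act_name (α : act) : name :=
  match α with In a => a | Out a => a end.

Fixpoint occurs (a : name) (P : proc) : Prop :=
  match P with
  | Nil => False
  | Pre α P' => a = act_name α \/ occurs a P'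
  | Par P1 P2 => occurs a P1 \/ occurs a P2
  end.

Inductive ctx : Type :=
| Hole : ctx
| CParL : proc -> ctx -> ctx
| CParR : ctx -> proc -> ctx
| CPre : act -> ctx -> ctx.

Fixpoint fill (C : ctx) (Q : proc) : proc :=
  match C with
  | Hole => Q
  | CParL P C' => Par P (fill C' Q)
  | CParR C' P => Par (fill C' Q) P
  | CPre α C' => Pre α (fill C' Q)
  end.

Definition in_ (a : name) (Q : proc) : Prop :=
  exists Q' Q'', scong Q (Par Q' (Pre (In a) Q'')).
Definition out_ (a : name) (Q : proc) : Prop :=
  exists Q' Q'', scong Q (Par Q' (Pre (Out a) Q'')).
Definition sync (a : name) (Q : proc) : Prop := in_ a Q /\ out_ a Q.

Definition cin (a : name) (P : proc) : Prop :=
  exists C Q, scong P (fill C Q) /\ in_ a Q.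
Definition cout (a : name) (P : proc) : Prop :=
  exists C Q, scong P (fill C Q) /\ out_ a Q.

Definition consumed (a : name) (P Q : proc) : Prop :=
  ~ occurs a Q /\
  exists Ra Ra', reds P Ra /\ red Ra Ra' /\ reds Ra' Q /\
    ~ occurs a Ra' /\
    (forall b, occurs b Ra <-> (occurs b Ra' \/ b = a)) /\
    sync a Ra.

Definition xor (X Y : Prop) : Prop := (X \/ Y) /\ ~ (X /\ Y).

(* Main.v *)
Require Import Defs.
From Stdlib Require Import Arith Lia Relations.

Lemma sc_in : forall P Q, scong P Q -> forall a, count_in a P = count_in a Q.
Proof. intros P Q H; induction H; intros; simpl in *; try destruct α; simpl;
  try rewrite ?IHscong, ?IHscong1, ?IHscong2; try lia; auto. Qed.
Lemma sc_out : forall P Q, scong P Q -> forall a, count_out a P = count_out a Q.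
Proof. intros P Q H; induction H; intros; simpl in *; try destruct α; simpl;
  try rewrite ?IHscong, ?IHscong1, ?IHscong2; try lia; auto. Qed.
Lemma sc_occ : forall P Q, scong P Q -> forall a, (occurs a P <-> occurs a Q).
Proof. intros P Q H; induction H; intros; simpl in *;
  try (specialize (IHscong a)); try (specialize (IHscong1 a));
  try (specialize (IHscong2 a)); tauto. Qed.

Lemma occ_cnt : forall a P, occurs a P <-> count_in a P + count_out a P > 0.
Proof.
  induction P; simpl.
  - split; [tauto| lia].
  - destruct a0; simpl; destruct (Nat.eqb_spec a n); subst; rewrite IHP; lia.
  - rewrite IHP1, IHP2; lia.
Qed.

Definition redex E b P1 Q1 := Par E (Par (Pre (In b) P1) (Pre (Out b) Q1)).

Lemma red_decomp : forall P Q, red P Q -> exists E b P1 Q1,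
  scong P (redex E b P1 Q1) /\ scong Q (Par E (Par P1 Q1)).
Proof.
  intros P Q H; induction H; unfold redex in *.
  - exists Nil, a, P, Q; split.
    + eapply sc_trans; [apply sc_sym, sc_par_nil| apply sc_par_comm].
    + eapply sc_trans; [apply sc_sym, sc_par_nil| apply sc_par_comm].
  - destruct IHred as (E & b & P1 & Q1 & H1 & H2).
    exists (Par E Q), b, P1, Q1; split.
    + eapply sc_trans. apply sc_cong_par. exact H1. apply sc_refl.
      eapply sc_trans. apply sc_par_comm. eapply sc_trans. apply sc_par_assoc.
      apply sc_cong_par. apply sc_par_comm. apply sc_refl.
    + eapply sc_trans. apply sc_cong_par. exact H2. apply sc_refl.
      eapply sc_trans. apply sc_par_comm. eapply sc_trans. apply sc_par_assoc.
      apply sc_cong_par. apply sc_par_comm. apply sc_refl.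
  - destruct IHred as (E & b & P1 & Q1 & H1 & H2).
    exists (Par P E), b, P1, Q1; split.
    + eapply sc_trans. apply sc_cong_par. apply sc_refl. exact H1. apply sc_par_assoc.
    + eapply sc_trans. apply sc_cong_par. apply sc_refl. exact H2. apply sc_par_assoc.
  - destruct IHred as (E & b & P2 & Q2 & H2 & H3).
    exists E, b, P2, Q2; split; eapply sc_trans; eauto. apply sc_sym; auto.
Qed.

Lemma red_cnt : forall P Q, red P Q -> forall c,
  count_in c Q <= count_in c P /\ count_out c Q <= count_out c P.
Proof.
  intros P Q H c; destruct (red_decomp P Q H) as (E & b & P1 & Q1 & H1 & H2).
  rewrite (sc_in _ _ H1), (sc_in _ _ H2), (sc_out _ _ H1), (sc_out _ _ H2).
  simpl; lia.
Qed.

Lemma reds_cnt : forall P Q, reds P Q -> forall c,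
  count_in c Q <= count_in c P /\ count_out c Q <= count_out c P.
Proof.
  intros P Q H; induction H; intros c.
  - apply red_cnt; auto.
  - lia.
  - specialize (IHclos_refl_trans1 c); specialize (IHclos_refl_trans2 c); lia.
Qed.

Lemma key : forall P Q0 Q a, linear P -> reds P Q0 -> red Q0 Q ->
  count_in a Q0 + count_out a Q0 > count_in a Q + count_out a Q ->
  ~ occurs a Q /\ (forall b, occurs b Q0 <-> (occurs b Q \/ b = a)) /\ sync a Q0.
Proof.
  intros P Q0 Q a HL HR H Hlt.
  destruct (red_decomp Q0 Q H) as (E & b & P1 & Q1 & H1 & H2).
  assert (Hc := reds_cnt P Q0 HR a). destruct (HL a) as [La Lb].
  pose proof (sc_in _ _ H1 a) as I1. pose proof (sc_in _ _ H2 a) as I2.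
  pose proof (sc_out _ _ H1 a) as O1. pose proof (sc_out _ _ H2 a) as O2.
  simpl in I1, I2, O1, O2.
  destruct (Nat.eqb_spec a b); [subst b| lia].
  split; [|split].
  - rewrite occ_cnt; lia.
  - intros c. rewrite (sc_occ _ _ H1), (sc_occ _ _ H2). simpl. intuition.
  - split.
    + exists (Par E (Pre (Out a) Q1)), P1.
      eapply sc_trans. exact H1. unfold redex.
      eapply sc_trans. apply sc_cong_par. apply sc_refl. apply sc_par_comm.
      apply sc_par_assoc.
    + exists (Par E (Pre (In a) P1)), Q1.
      eapply sc_trans. exact H1. apply sc_par_assoc.
Qed.

Lemma in_fill : forall a C Q, count_in a (fill C Q) >= count_in a Q.
Proof. induction C; intros; simpl; try destruct a0; simpl; try specialize (IHC Q); lia. Qed.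
Lemma out_fill : forall a C Q, count_out a (fill C Q) >= count_out a Q.
Proof. induction C; intros; simpl; try destruct a0; simpl; try specialize (IHC Q); lia. Qed.

Lemma find_in : forall a P, count_in a P >= 1 -> exists C R, P = fill C (Pre (In a) R).
Proof.
  induction P; simpl; intros H.
  - lia.
  - destruct a0 as [n|n].
    + destruct (Nat.eqb_spec a n).
      * subst; exists Hole, P; reflexivity.
      * destruct IHP as (C & R & E); [lia|]. exists (CPre (In n) C), R; simpl; congruence.
    + destruct IHP as (C & R & E); [lia|]. exists (CPre (Out n) C), R; simpl; congruence.
  - destruct (le_lt_dec 1 (count_in a P1)).
    + destruct IHP1 as (C & R & E); [lia|]. exists (CParR C P2), R; simpl; congruence.
    + destruct IHP2 as (C & R & E); [lia|]. exists (CParL P1 C), R; simpl; congruence.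
Qed.
Lemma find_out : forall a P, count_out a P >= 1 -> exists C R, P = fill C (Pre (Out a) R).
Proof.
  induction P; simpl; intros H.
  - lia.
  - destruct a0 as [n|n].
    + destruct IHP as (C & R & E); [lia|]. exists (CPre (In n) C), R; simpl; congruence.
    + destruct (Nat.eqb_spec a n).
      * subst; exists Hole, P; reflexivity.
      * destruct IHP as (C & R & E); [lia|]. exists (CPre (Out n) C), R; simpl; congruence.
  - destruct (le_lt_dec 1 (count_out a P1)).
    + destruct IHP1 as (C & R & E); [lia|]. exists (CParR C P2), R; simpl; congruence.
    + destruct IHP2 as (C & R & E); [lia|]. exists (CParL P1 C), R; simpl; congruence.
Qed.

Lemma pre_par : forall α R, scong (Pre α R) (Par Nil (Pre α R)).
Proof. intros; eapply sc_trans; [apply sc_sym, sc_par_nil| apply sc_par_comm]. Qed.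

Lemma cin_iff : forall a P, cin a P <-> count_in a P >= 1.
Proof.
  split.
  - intros (C & Q & H1 & Q' & Q'' & H2).
    rewrite (sc_in _ _ H1). pose proof (in_fill a C Q). rewrite (sc_in _ _ H2) in H.
    simpl in H. rewrite Nat.eqb_refl in H. lia.
  - intros H; destruct (find_in a P H) as (C & R & E); subst.
    exists C, (Pre (In a) R); split; [apply sc_refl|]. exists Nil, R; apply pre_par.
Qed.
Lemma cout_iff : forall a P, cout a P <-> count_out a P >= 1.
Proof.
  split.
  - intros (C & Q & H1 & Q' & Q'' & H2).
    rewrite (sc_out _ _ H1). pose proof (out_fill a C Q). rewrite (sc_out _ _ H2) in H.
    simpl in H. rewrite Nat.eqb_refl in H. lia.
  - intros H; destruct (find_out a P H) as (C & R & E); subst.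
    exists C, (Pre (Out a) R); split; [apply sc_refl|]. exists Nil, R; apply pre_par.
Qed.

Lemma inv : forall P a (f : name -> proc -> nat),
  (forall Q, f a Q = count_in a Q) \/ (forall Q, f a Q = count_out a Q) ->
  linear P -> forall Q, reds P Q -> f a P >= 1 -> f a Q >= 1 \/ consumed a P Q.
Proof.
  intros P a f Hf HL Q HR Hp.
  apply clos_rt_rtn1 in HR. induction HR as [|Q0 Q H HR IH].
  - auto.
  - assert (HR' : reds P Q0) by (apply clos_rtn1_rt; auto).
    pose proof (red_cnt _ _ H a) as Hc.
    destruct IH as [IH|(Hn & Ra & Ra' & R1 & R2 & R3 & R4 & R5 & R6)].
    + destruct (le_lt_dec 1 (f a Q)); [now left|]. right.
      destruct (key P Q0 Q a HL HR' H) as (K1 & K2 & K3).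
      { destruct Hf as [Hf|Hf]; rewrite !Hf in *; lia. }
      split; auto. exists Q0, Q; split; [|split; [|split; [|split; [|split]]]];
      auto; apply rt_refl.
    + right. split.
      * rewrite occ_cnt in *. lia.
      * exists Ra, Ra'; split; [|split; [|split; [|split; [|split]]]]; auto.
        eapply rt_trans; eauto. apply rt_step; auto.
Qed.

Lemma cons_not : forall a P Q, consumed a P Q -> count_in a Q = 0 /\ count_out a Q = 0.
Proof. intros a P Q [H _]. rewrite occ_cnt in H. lia. Qed.

Theorem lemma2 :
  forall (P Q : proc) (a : name),
    linear P -> reds P Q ->
    (cin a P -> xor (cin a Q) (consumed a P Q)) /\
    (cout a P -> xor (cout a Q) (consumed a P Q)).
Proof.
  intros P Q a HL HR; split; intros H; split.
  - rewrite cin_iff in *.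
    apply (inv P a count_in (or_introl (fun _ => eq_refl)) HL Q HR H).
  - rewrite cin_iff. intros [H1 H2]. apply cons_not in H2. lia.
  - rewrite cout_iff in *.
    apply (inv P a count_out (or_intror (fun _ => eq_refl)) HL Q HR H).
  - rewrite cout_iff. intros [H1 H2]. apply cons_not in H2. lia.
Qed.
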